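(* Let $p$ be a prime and let $n=n_1n_2$ with $n_1,n_2\ge 1$ integers, and assume $n$ is not prime. Let $\mathbb{F}_{p^n}$ be represented as a tower $\mathbb{F}_{(p^{n_1})^{n_2}}=\mathbb{F}_{p^{n_1}}[x]/(\psi(x))$, where $\psi\in\mathbb{F}_{p^{n_1}}[x]$ is monic irreducible of degree $n_2$, and let $\rho:\mathbb{F}_{p^{n_1}}[x]\to\mathbb{F}_{p^n}$ be reduction modulo $\psi$. Let $d$ be the largest divisor of $n$ with $1<d<n$, and let $\mathbb{F}_{p^d}\subset\mathbb{F}_{p^n}$ be the unique subfield with $p^d$ elements. Let $T\in\mathbb{F}_{p^n}^*$ be an element not lying in any proper subfield of $\mathbb{F}_{p^n}$, represented by a polynomial of degree larger than $n_2-d/n_1$. Then there exist a nonzero $u\in\mathbb{F}_{p^d}$ and a nonzero polynomial $P\in\mathbb{F}_{p^{n_1}}[x]$ of degree at most $n_2-\lceil d/n_1\rceil$ such that $\rho(P)=uT$. Consequently, for every generator $g$ of $\mathbb{F}_{p^n}^*$, $$\log_g\rho(P)\equiv\log_g T \pmod{\Phi_n(p)}.$$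
   Context: $\Phi_n$ denotes the $n$-th cyclotomic polynomial. For a generator $g$ of the cyclic group $\mathbb{F}_{p^n}^*$, $\log_g z$ denotes the discrete logarithm of $z\in\mathbb{F}_{p^n}^*$, an integer defined modulo $p^n-1$; since $\Phi_n(p)$ divides $p^n-1$, congruences of discrete logarithms modulo $\Phi_n(p)$ are well defined. Elements of $\mathbb{F}_{p^n}$ are represented by their unique representative polynomial of degree $<n_2$ in $\mathbb{F}_{p^{n_1}}[x]$. *)

(* Defs.v *)
From HB Require Import structures.
From mathcomp Require Import all_boot all_order all_algebra all_field.
Set Implicit Arguments. Unset Strict Implicit. Unset Printing Implicit Defensive.
Import Order.TTheory GRing.Theory Num.Theory.
Local Open Scope ring_scope.

(* The tower field F_{(p^n1)^n2} = K[x]/(psi), K a finite field of order p^n1,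
   psi monic irreducible; we use MathComp's {poly %/ psi with mi} (qfpoly). *)
Notation tower psi mi := (@qfpoly _ psi mi).

Definition rho (K : fieldType) (psi : {poly K}) (mi : monic_irreducible_poly psi)
  (P : {poly K}) : tower psi mi := in_qpoly psi P.

(* Main.v *)
Require Import Defs.
From HB Require Import structures.
From mathcomp Require Import all_boot all_order all_algebra all_field.
From mathcomp Require Import all_fingroup all_solvable zify ring.
Import Order.TTheory GRing.Theory Num.Theory.
Local Open Scope ring_scope.
Section Sub.
Variables (F : finFieldType) (p n d : nat).
Hypotheses (pp : prime p) (cardF : #|F| = (p ^ n)%N) (dn : (d %| n)%N) (d0 : (0 < d)%N).

Let q := (p ^ d)%N.
Definition subF : {pred F} := [pred x : F | x ^+ q == x].

Lemma pcharF : p \in [pchar F].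
Proof. exact: card_finPcharP cardF pp. Qed.

Lemma pnat_q : [pchar F].-nat q.
Proof.
rewrite /q pnatX (eq_pnat _ (pcharf_eq pcharF)) pnat_id ?orbT //.
Qed.

Lemma subF_closed : GRing.divring_closed subF.
Proof.
split.
- by rewrite inE expr1n.
- move=> u v; rewrite !inE => /eqP hu /eqP hv.
  by rewrite exprDn_pchar ?pnat_q // exprNn_pchar ?pnat_q // hu hv.
- move=> u v; rewrite !inE => /eqP hu /eqP hv.
  by rewrite exprMn exprVn hu hv.
Qed.

Lemma F_prim_root : exists g : F, (#|F|.-1).-primitive_root g.
Proof.
have hF1 := finNzRing_gt1 F.
have := @has_prim_root F (#|F|.-1) (enum [pred x : F | x != 0]).
case/(_ _ _ _ _)/hasP => [||||g _ hg]; last by exists g.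
- by rewrite -ltnS prednK // ltnW.
- apply/allP => x; rewrite mem_enum inE => x0.
  rewrite unity_rootE; apply/eqP; apply: (mulIf x0).
  by rewrite -exprSr prednK ?expf_card ?mul1r // ltnW.
- exact: enum_uniq.
- by rewrite -cardE cardC1.
Qed.

Lemma kdvdN : ((p ^ d).-1 %| #|F|.-1)%N.
Proof.
by rewrite cardF -(divnK dn) mulnC expnM [X in (_ %| X)%N]predn_exp dvdn_mulr.
Qed.

Lemma card_subF : #|subF| = q.
Proof.
have q1 : (1 < q)%N by rewrite /q -(expn0 p) ltn_exp2l ?prime_gt1.
apply/eqP; rewrite eqn_leq; apply/andP; split.
  pose P : {poly F} := 'X^q - 'X.
  have sP : size P = q.+1.
    by rewrite /P size_polyDl ?size_polyXn // size_polyN size_polyX ltnS.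
  have P0 : P != 0 by rewrite -size_poly_gt0 sP.
  have := @max_poly_roots F P (enum subF) P0.
  rewrite enum_uniq sP cardE ltnS; apply => //.
  by apply/allP => x; rewrite mem_enum inE /root /P !hornerE subr_eq0.
have [g hg] := F_prim_root.
set N := #|F|.-1; set k := q.-1.
have hk := kdvdN; rewrite -/q -/N -/k in hk.
have N0 : (0 < N)%N by rewrite /N -ltnS prednK ?finNzRing_gt1 // ltnW ?finNzRing_gt1.
have k0 : (0 < k)%N by rewrite /k -ltnS prednK // ltnW.
have hz := exp_prim_root hg (N %/ k).
have e1 : gcdn (N %/ k) N = (N %/ k)%N by apply/gcdn_idPl; rewrite -{2}(divnK hk) dvdn_mulr.
rewrite -/N e1 in hz.
have ek : (N %/ (N %/ k))%N = k.
  by rewrite -{1}(divnK hk) mulKn // divn_gt0 // dvdn_leq.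
rewrite ek in hz.
set z := g ^+ (N %/ k) in hz.
pose f := fun i : 'I_k => z ^+ i.
have finj : injective f.
  move=> i j /eqP; rewrite /f (eq_prim_root_expr hz) !modn_small //.
  by move/eqP/val_inj.
have hA : #|[set f i | i : 'I_k]| = k by rewrite card_imset // card_ord.
have sub : [set f i | i : 'I_k] \subset [predD1 subF & 0].
  apply/subsetP => x /imsetP [i _ ->]; rewrite !inE /f.
  apply/andP; split.
    rewrite expf_neq0 //; apply/eqP => z0; have := prim_expr_order hz.
    by rewrite z0 expr0n eqn0Ngt k0 /= => /eqP; rewrite eq_sym oner_eq0.
  rewrite -exprM mulnC exprM -[q](prednK (ltnW q1)) -/k exprS.
  by rewrite (prim_expr_order hz) mulr1.
have := subset_leq_card sub; rewrite hA => hle.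
rewrite (cardD1 0) inE expr0n /= eqn0Ngt (ltnW q1) /= eqxx add1n.
by rewrite -[q](prednK (ltnW q1)) ltnS.
Qed.
End Sub.
Lemma cyclo_part (p n d : nat) : (0 < d)%N -> (d < n)%N -> (d %| n)%N ->
  exists M : int, (p%:Z ^+ n - 1 = (p%:Z ^+ d - 1) * M /\ (('Phi_n).[p%:Z] %| M)%Z).
Proof.
move=> d0 dn ddn.
have n0 : (0 < n)%N by apply: leq_trans dn.
have e := prod_Cyclotomic n0.
rewrite (bigID (fun e => (e %| d)%N)) /= in e.
have e1 : \prod_(e <- divisors n | (e %| d)%N) 'Phi_e = 'X^d - 1.
  rewrite -big_filter -(prod_Cyclotomic d0); apply: perm_big; apply: uniq_perm.
  - by rewrite filter_uniq // divisors_uniq.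
  - exact: divisors_uniq.
  - move=> e0; rewrite mem_filter -!dvdn_divisors //.
    by apply/andP/idP => [[]//|h]; split => //; apply: dvdn_trans ddn.
have nin : n \in [seq e <- divisors n | ~~ (e %| d)%N].
  rewrite mem_filter -dvdn_divisors // dvdnn andbT.
  by apply/negP => /(dvdn_leq d0); rewrite leqNgt dn.
rewrite e1 -big_filter (bigD1_seq n nin) ?filter_uniq ?divisors_uniq // in e.
set R := \prod_(_ <- _ | _) _ in e.
exists (('Phi_n).[p%:Z] * R.[p%:Z]); split; last exact: dvdz_mulr.
have := congr1 (fun P : {poly int} => P.[p%:Z]) e.
by rewrite /= !hornerE => <-.
Qed.
Lemma ceil_facts (d n1 n2 : nat) : (0 < n1)%N -> (0 < d)%N -> (d <= n1 * n2)%N ->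
  exists cn : nat, Num.ceil (d%:Q / n1%:Q) = cn%:Z /\
    [/\ (0 < cn)%N, (cn <= n2)%N & (n1 * cn < d + n1)%N].
Proof.
move=> n10 d0 dn.
set x := d%:Q / n1%:Q.
have n1Q : 0 < n1%:Q by rewrite ltr0n.
have c0 : 0 < Num.ceil x by rewrite ceil_gt0 divr_gt0 ?ltr0n.
exists `|Num.ceil x|%N.
have ec : (`|Num.ceil x|%N)%:Z = Num.ceil x by rewrite gez0_abs // ltW.
split => //.
have h1 : (Num.ceil x <= n2%:Z).
  rewrite ceil_le_int /x ler_pdivrMr // -natrM ler_nat mulnC //.
have h2 : ((Num.ceil x - 1) * n1%:Z < d%:Z).
  have := ceilB1_lt x; rewrite /x ltr_pdivlMr //.
  by rewrite -[n1%:Q]/((n1%:Z)%:~R) -intrM -[d%:Q]/((d%:Z)%:~R) ltr_int.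
move: c0 h1 h2; rewrite -ec; set cn := `|_|%N => ha hb hc.
rewrite !absz_nat.
rewrite mulrBl mul1r in hc. split; lia.
Qed.
Theorem mainTheorem1 (p n1 n2 d : nat) (K : finFieldType) (psi : {poly K})
    (mi : monic_irreducible_poly psi) (T : tower psi mi) :
  prime p -> (0 < n1)%N -> (0 < n2)%N -> ~~ prime (n1 * n2) ->
  #|K| = (p ^ n1)%N ->
  size psi = n2.+1 ->
  (* d is the largest divisor of n = n1 n2 with 1 < d < n *)
  (d %| n1 * n2)%N -> (1 < d < n1 * n2)%N ->
  (forall e : nat, (e %| n1 * n2)%N -> (1 < e < n1 * n2)%N -> (e <= d)%N) ->
  (* T is nonzero and lies in no proper subfield *)
  T != 0 ->
  (forall S : {pred tower psi mi}, GRing.divring_closed S -> T \in S ->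
     forall z : tower psi mi, z \in S) ->
  (* the representative polynomial of T has degree > n2 - d/n1 *)
  (n2%:Q - d%:Q / n1%:Q < ((size (val T)).-1)%:Q) ->
  exists u : tower psi mi, exists P : {poly K},
    [/\ u != 0 /\
        (exists2 S : {pred tower psi mi}, GRing.divring_closed S &
          (#|S| = (p ^ d)%N /\ u \in S)),
        P != 0 /\ ((size P).-1)%:Z <= n2%:Z - (Num.ceil (d%:Q / n1%:Q)),
        rho mi P = u * T &
        (forall g : tower psi mi, (#|tower psi mi|.-1).-primitive_root g ->
          forall a b : nat, g ^+ a = rho mi P -> g ^+ b = T ->
          (a%:Z = b%:Z %[mod ('Phi_(n1 * n2)).[p%:Z]])%Z)].
Proof.
move=> pp n10 n20 nprime cK spsi ddvd /andP[d1 dn] dmax T0 Tgen Tdeg.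
have cardF : #|tower psi mi| = (p ^ (n1 * n2))%N.
  by rewrite card_qfpoly spsi cK -expnM.
have d0 : (0 < d)%N by apply: ltnW.
have Sc := subF_closed _ _ _ d pp cardF.
have cS := card_subF _ _ _ _ pp cardF ddvd d0.
set S := subF _ _ _ in Sc cS.
have [cn [ec [c0 cn2 cnd]]] := ceil_facts _ _ n2 n10 d0 (ltnW dn).
rewrite ec.
set m := (n2 - cn).+1.
have mn2 : (m <= n2)%N by rewrite /m; lia.
have rho_small : forall v : {poly_m K}, val (rho mi (val v)) = val v.
  move=> v; rewrite /rho; apply: in_qpoly_small; rewrite (mk_monicE mi) spsi ltnS.
  exact: leq_trans (size_npoly v) mn2.
pose f := fun x : (tower psi mi * {poly_m K}) => x.1 * T + rho mi (val x.2).
pose A := setX [set x in S] [set: {poly_m K}].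
have cardA : #|A| = (p ^ (d + n1 * m))%N.
  by rewrite cardsX cardsE cS cardsT card_npoly cK expnD expnM.
have p1 : (1 < p)%N by apply: prime_gt1.
case: (boolP [exists x in A, exists y in A, (x != y) && (f x == f y)]); last first.
  move=> H; exfalso.
  have inj : {in A &, injective f}.
    move=> x y xA yA /eqP e; apply/eqP; apply: contraNT H => xy.
    apply/existsP; exists x; rewrite xA /=; apply/existsP; exists y.
    by rewrite yA xy e.
  have := max_card (f @: A); rewrite card_in_imset // cardA cardF.
  have := leq_mul (leqnn n1) cn2.
  rewrite leq_exp2l // /m mulnS mulnBr; lia.
case/exists_inP => -[u1 v1] xA /exists_inP [[u2 v2] yA /andP [xy /eqP e]].
rewrite /f /= in e.
move: xA yA; rewrite !in_setX /= !inE /= !andbT => u1S u2S.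
have rhoB : forall P Q : {poly K}, rho mi (P - Q) = rho mi P - rho mi Q.
  by move=> P Q; rewrite /rho raddfB.
have ePu : rho mi (val v2 - val v1) = (u1 - u2) * T.
  have er2 : rho mi (val v2) = u1 * T + rho mi (val v1) - u2 * T.
    by rewrite e [u2 * T + _]addrC addrK.
  rewrite rhoB er2; ring.
have u0 : u1 - u2 != 0.
  apply/negP; rewrite subr_eq0 => /eqP u12; move: xy; rewrite u12.
  have -> : v1 = v2.
    apply: val_inj; rewrite -rho_small -[RHS]rho_small; congr val.
    by move: e; rewrite u12 => /addrI.
  by rewrite eqxx.
have uS : u1 - u2 \in S.
  by case: Sc => _ hB _; apply: hB.
exists (u1 - u2)%R, (val v2 - val v1)%R; split.
- split => //; exists S => //.
- split.
    apply/eqP => P0; move: ePu; rewrite P0 /rho raddf0 => /esym/eqP.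
    by rewrite mulf_eq0 (negbTE u0) (negbTE T0).
  have : (size (val v2 - val v1)%R <= m)%N.
    apply: leq_trans (size_polyD _ _) _.
    by rewrite size_polyN geq_max !size_npoly.
  rewrite /m => h; rewrite subzn // lez_nat; move: h; case: (size _) => //=.
- exact: ePu.
move=> g hg a b ea eb.
set u := u1 - u2 in u0 uS ePu ea.
set k := (p ^ d).-1.
have q0 : (0 < p ^ d)%N by rewrite expn_gt0 prime_gt0.
have uS' : u ^+ (p ^ d) = u by apply/eqP; exact: uS.
have uk : u ^+ k = 1.
  by apply: (mulIf u0); rewrite mul1r -exprSr /k prednK.
have ek : g ^+ (a * k) = g ^+ (b * k).
  by rewrite !exprM ea ePu eb exprMn uk mul1r.
move/eqP: ek; rewrite (eq_prim_root_expr hg) => /eqP emod.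
have [M [eM hM]] := cyclo_part p _ _ d0 dn ddvd.
have hN : (#|tower psi mi|.-1)%:Z = p%:Z ^+ (n1 * n2) - 1.
  by rewrite cardF predn_int ?expn_gt0 ?prime_gt0 // -!natz natrX.
have hk : k%:Z = p%:Z ^+ d - 1.
  by rewrite /k predn_int // -!natz natrX.
have hd : (#|tower psi mi|.-1%:Z %| (a * k)%:Z - (b * k)%:Z)%Z.
  by rewrite -eqz_mod_dvd; apply/eqP; rewrite !modz_nat emod.
move: hd; rewrite hN eM !PoszM -mulrBl -hk [k%:Z * M]mulrC dvdz_mul2r => [HM|].
  by apply/eqP; rewrite eqz_mod_dvd; apply: dvdz_trans hM HM.
by rewrite eqz_nat -lt0n /k -ltnS prednK // -(expn0 p) ltn_exp2l ?prime_gt1.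
Qed.
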